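(* Let $\kappa$ be an infinite cardinal and $\mathcal{U}$ any fine ultrafilter on $\kappa$. Define $\Sigma:\mathbb{Z}^\kappa\to\mathbb{Z}^\kappa/\mathcal{U}$ by $\Sigma(\mathbf{x})=[\mathbf{f}_{\mathbf{x}}]_{\mathcal{U}}$, with $\mathbb{Z}$ embedded in the ultrapower via constant functions. Then $(\mathbb{Z}^\kappa/\mathcal{U},\Sigma)$ is a ring of Euclidean integers for $\kappa$, i.e. it satisfies (0), (RA), (LA), (CA) and (PA).
   Context: Every ordinal $\alpha$ has a unique base-2 normal form $\alpha=2^{\alpha_1}+\dots+2^{\alpha_n}$ with $\alpha_1>\dots>\alpha_n$; put $L_\alpha=\{\alpha_1,\dots,\alpha_n\}$. Formal inclusion: $\alpha\sqsubseteq\beta$ iff $L_\alpha\subseteq L_\beta$, $\alpha\sqsubset\beta$ iff $L_\alpha\subsetneq L_\beta$. $\alpha\vee\beta$ is the ordinal $\gamma$ with $L_\gamma=L_\alpha\cup L_\beta$. For $\theta<\kappa$ the cone is $C(\theta)=\{\alpha<\kappa\mid\theta\sqsubset\alpha\}$; a filter on $\kappa$ is fine if it contains all cones. For $\mathbf{x}\in\mathbb{Z}^\kappa$, $\mathbf{f}_{\mathbf{x}}(\alpha)=\sum_{\beta\sqsubseteq\alpha}x_\beta$. A ring of Euclidean integers for $\kappa$ is a discretely ordered commutative integral domain $\mathbf{Z}_\kappa$ containing $\mathbb{Z}$ as an ordered subring, together with a map $\Sigma:\mathbb{Z}^\kappa\to\mathbf{Z}_\kappa$, written $\Sigma(\mathbf{x})=\sum_\alpha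 x_\alpha$, such that: (0) if only finitely many $x_\alpha\neq0$ then $\sum_\alpha x_\alpha$ is the ordinary finite sum; (RA) every element of $\mathbf{Z}_\kappa$ is $\sum_\alpha x_\alpha$ for some $\mathbf{x}\in\mathbb{Z}^\kappa$; (LA) $u\sum_\alpha x_\alpha+v\sum_\alpha y_\alpha=\sum_\alpha(ux_\alpha+vy_\alpha)$ for all $u,v\in\mathbb{Z}$; (CA) if there is $\theta<\kappa$ with $\mathbf{f}_{\mathbf{x}}(\delta)\le\mathbf{f}_{\mathbf{y}}(\delta)$ for all $\delta<\kappa$ with $\theta\sqsubseteq\delta$, then $\sum_\alpha x_\alpha\le\sum_\alpha y_\alpha$; (PA) $(\sum_\alpha x_\alpha)(\sum_\beta y_\beta)=\sum_\gamma z_\gamma$ where $z_\gamma=\sum_{\alpha\vee\beta=\gamma}x_\alpha y_\beta$. *)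

(* Defs.v *)
From HB Require Import structures.
From mathcomp Require Import all_boot all_order all_algebra.
From mathcomp Require Import boolp classical_sets cardinality fsbigop.
Set Implicit Arguments. Unset Strict Implicit. Unset Printing Implicit Defensive.
Import Order.TTheory GRing.Theory Num.Theory.
Local Open Scope classical_set_scope.
Local Open Scope ring_scope.

(* The ordinals below kappa.  kappa is represented by a type K (its elements
   are the ordinals alpha < kappa) equipped with its ordinal order ltK.       *)

Definition strict_well_order {K : Type} (ltK : K -> K -> Prop) : Prop :=
  [/\ (forall a, ~ ltK a a),
      (forall a b c, ltK a b -> ltK b c -> ltK a c),
      (forall a b, [\/ ltK a b, a = b | ltK b a]) &
      well_founded ltK].

Definition infinite_cardinal {K : Type} (ltK : K -> K -> Prop) : Prop :=
  (exists f : nat -> K, injective f) /\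
  (forall a : K, ~ exists f : K -> K, injective f /\ forall k, ltK (f k) a).

(* For base-2
   normal forms this is exactly the ordinal order. *)
Definition lexmax_lt {K : eqType} (ltK : K -> K -> Prop) (S T : seq K) : Prop :=
  exists c, [/\ c \in T, c \notin S &
                forall d, ltK c d -> (d \in S) = (d \in T)].

(* L alpha is (an enumeration of) the set L_alpha = {alpha_1,...,alpha_n} of
   exponents of the base-2 normal form alpha = 2^alpha_1 + ... + 2^alpha_n.
   The map alpha |-> L_alpha is characterised as the (unique, since (K,ltK) is
   a well-order) order isomorphism between (K, ltK) and the finite subsets of K
   ordered by lexmax_lt: every finite set of ordinals < kappa is L_alpha for
   some alpha < kappa, and alpha < beta iff max(L_alpha Delta L_beta) is in
   L_beta. *)
Definition base2_normal_form {K : eqType} (ltK : K -> K -> Prop)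
    (L : K -> seq K) : Prop :=
  (forall s : seq K, exists a, L a =i s) /\
  (forall a b, ltK a b <-> lexmax_lt ltK (L a) (L b)).

Section Formal.
Variables (K : choiceType) (L : K -> seq K).

Definition fsub (a b : K) : Prop := {subset L a <= L b}.
Definition fsubS (a b : K) : Prop := fsub a b /\ ~ fsub b a.
Definition fjoin_is (a b c : K) : Prop := L c =i L a ++ L b.

Definition cone (t : K) : set K := [set a | fsubS t a].

Definition fx (x : K -> int) (a : K) : int := \sum_(b \in [set b | fsub b a]) x b.

Definition zprod (x y : K -> int) (c : K) : int :=
  \sum_(p \in [set p : K * K | fjoin_is p.1 p.2 c]) (x p.1 * y p.2).

Record euclidean_integers (R : Type) (zero one : R) (add mul : R -> R -> R)
    (opp : R -> R) (le : R -> R -> Prop) (emb : int -> R)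
    (Sig : (K -> int) -> R) : Prop := {
  ei_addA : forall a b c, add a (add b c) = add (add a b) c;
  ei_addC : forall a b, add a b = add b a;
  ei_add0 : forall a, add zero a = a;
  ei_addN : forall a, add (opp a) a = zero;
  ei_mulA : forall a b c, mul a (mul b c) = mul (mul a b) c;
  ei_mulC : forall a b, mul a b = mul b a;
  ei_mul1 : forall a, mul one a = a;
  ei_mulD : forall a b c, mul a (add b c) = add (mul a b) (mul a c);
  ei_oneNZ : one <> zero;
  ei_domain : forall a b, mul a b = zero -> a = zero \/ b = zero;
  ei_le_refl : forall a, le a a;
  ei_le_anti : forall a b, le a b -> le b a -> a = b;
  ei_le_trans : forall a b c, le a b -> le b c -> le a c;
  ei_le_total : forall a b, le a b \/ le b a;
  ei_le_add : forall a b c, le a b -> le (add a c) (add b c);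
  ei_le_mul : forall a b, le zero a -> le zero b -> le zero (mul a b);
  ei_discrete : forall a, le zero a -> a <> zero -> le one a;
  ei_emb0 : emb 0 = zero;
  ei_emb1 : emb 1 = one;
  ei_embD : forall m n, emb (m + n) = add (emb m) (emb n);
  ei_embM : forall m n, emb (m * n) = mul (emb m) (emb n);
  ei_embN : forall m, emb (- m) = opp (emb m);
  ei_emb_inj : injective emb;
  ei_emb_le : forall m n, le (emb m) (emb n) <-> (m <= n)%R;
  ei_fin : forall x : K -> int, finite_set [set a | x a != 0] ->
      Sig x = emb (\sum_(a \in [set: K]) x a);
  ei_RA : forall r : R, exists x, Sig x = r;
  ei_LA : forall (u v : int) (x y : K -> int),
      add (mul (emb u) (Sig x)) (mul (emb v) (Sig y)) =
      Sig (fun a => u * x a + v * y a);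
  ei_CA : forall x y : K -> int,
      (exists t, forall d, fsub t d -> fx x d <= fx y d) -> le (Sig x) (Sig y);
  ei_PA : forall x y : K -> int, mul (Sig x) (Sig y) = Sig (zprod x y)
}.

End Formal.

Definition ultrafilter {K : Type} (U : set (set K)) : Prop :=
  [/\ U setT, ~ U set0,
      (forall A B, A `<=` B -> U A -> U B),
      (forall A B, U A -> U B -> U (A `&` B)) &
      (forall A, U A \/ U (~` A))].

Definition fine {K : choiceType} (L : K -> seq K) (U : set (set K)) : Prop :=
  forall t, U (cone L t).

Section Ultrapower.
Variables (K : Type) (U : set (set K)).

Definition upclass (f : K -> int) : set (K -> int) := [set g | U [set k | f k = g k]].

Definition ultrapower : Type := {A : set (K -> int) | exists f, A = upclass f}.

Definition upcls (f : K -> int) : ultrapower := exist _ (upclass f) (ex_intro _ f erefl).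
Definition uprep (a : ultrapower) : K -> int := projT1 (cid (proj2_sig a)).

Definition up_zero : ultrapower := upcls (fun _ => 0).
Definition up_one : ultrapower := upcls (fun _ => 1).
Definition up_add (a b : ultrapower) : ultrapower :=
  upcls (fun k => uprep a k + uprep b k).
Definition up_mul (a b : ultrapower) : ultrapower :=
  upcls (fun k => uprep a k * uprep b k).
Definition up_opp (a : ultrapower) : ultrapower := upcls (fun k => - uprep a k).
Definition up_le (a b : ultrapower) : Prop := U [set k | uprep a k <= uprep b k].
Definition up_emb (n : int) : ultrapower := upcls (fun _ => n).

End Ultrapower.

Definition up_Sigma {K : choiceType} (L : K -> seq K) (U : set (set K))
    (x : K -> int) : ultrapower U := upcls U (fx L x).

(* Main.v *)
Require Import Defs.
From HB Require Import structures.
From mathcomp Require Import all_boot all_order all_algebra.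
From mathcomp Require Import boolp classical_sets cardinality fsbigop.
Set Implicit Arguments. Unset Strict Implicit. Unset Printing Implicit Defensive.
Import Order.TTheory GRing.Theory Num.Theory.
Local Open Scope classical_set_scope.
Local Open Scope ring_scope.

Section UP.
Variables (K : Type) (U : set (set K)).
Hypothesis HU : ultrafilter U.

Lemma UT : U setT. Proof. by case: HU. Qed.
Lemma UN0 : ~ U set0. Proof. by case: HU. Qed.
Lemma Umono A B : A `<=` B -> U A -> U B.
Proof. by case: HU => _ _ h _ _; apply: h. Qed.
Lemma UI A B : U A -> U B -> U (A `&` B).
Proof. by case: HU => _ _ _ h _; apply: h. Qed.
Lemma Uult A : U A \/ U (~` A). Proof. by case: HU. Qed.
Lemma U2 (A B C : set K) : U A -> U B -> (forall k, A k -> B k -> C k) -> U C.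
Proof. move=> a b h; apply: Umono (UI a b) => k [] ; exact: h. Qed.
Lemma U1 (A C : set K) : U A -> (forall k, A k -> C k) -> U C.
Proof. by move=> a h; apply: Umono a. Qed.

Lemma upclass_eq f g : U [set k | f k = g k] -> upclass U f = upclass U g.
Proof.
move=> E; rewrite /upclass; apply/funext => h /=; apply/propext; split => H.
  by apply: (U2 E H) => k /= <-.
by apply: (U2 E H) => k /= ->.
Qed.

Lemma upclsP f g : upcls U f = upcls U g <-> U [set k | f k = g k].
Proof.
split.
  move=> E; have : upclass U g g by exact: (U1 UT (fun k _ => erefl (g k))).
  by have := f_equal (@proj1_sig _ _) E => /= <-.
move=> E; apply: eq_sig_hprop => /=; last exact: upclass_eq.
by move=> *; exact: Prop_irrelevance.
Qed.

Lemma uprepE a : a = upcls U (uprep a).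
Proof.
rewrite /uprep; case: a => A HA /=; case: cid => f Hf /=.
apply: eq_sig_hprop => //=; by move=> *; exact: Prop_irrelevance.
Qed.

Lemma uprep_cls f : U [set k | uprep (upcls U f) k = f k].
Proof. by apply/upclsP; rewrite -uprepE. Qed.

Lemma up_ind (P : ultrapower U -> Prop) : (forall f, P (upcls U f)) -> forall a, P a.
Proof. by move=> h a; rewrite (uprepE a); exact: h. Qed.

Lemma addE f g : up_add (upcls U f) (upcls U g) = upcls U (fun k => f k + g k).
Proof. by apply/upclsP; apply: (U2 (uprep_cls f) (uprep_cls g)) => k /= -> ->. Qed.
Lemma mulE f g : up_mul (upcls U f) (upcls U g) = upcls U (fun k => f k * g k).
Proof. by apply/upclsP; apply: (U2 (uprep_cls f) (uprep_cls g)) => k /= -> ->. Qed.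
Lemma oppE f : up_opp (upcls U f) = upcls U (fun k => - f k).
Proof. by apply/upclsP; apply: (U1 (uprep_cls f)) => k /= ->. Qed.
Lemma leE f g : up_le (upcls U f) (upcls U g) <-> U [set k | f k <= g k].
Proof.
rewrite /up_le; split => H; apply: (U2 (UI (uprep_cls f) (uprep_cls g)) H).
  by move=> k [/= e1 e2]; rewrite e1 e2.
by move=> k [/= e1 e2]; rewrite e1 e2.
Qed.

Lemma const_set (P : Prop) : U [set _ : K | P] -> P.
Proof.
move=> H; apply: contrapT => nP; apply: UN0; apply: Umono H => k /=; exact: nP.
Qed.

Lemma eqU f g : (forall k, f k = g k) -> upcls U f = upcls U g.
Proof. by move=> h; congr upcls; apply/funext. Qed.

End UP.
Section Formal2.
Variables (K : choiceType) (ltK : K -> K -> Prop) (L : K -> seq K).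
Hypothesis HW : strict_well_order ltK.
Hypothesis HB : base2_normal_form ltK L.

Lemma L_inj a b : L a =i L b -> a = b.
Proof.
move=> E; case: HW => _ _ tri _; case: HB => _ iso.
case: (tri a b) => [/iso [c [cb ca _]]| //| /iso [c [ca cb _]]].
  by case/negP: ca; apply: (etrans (E c) cb).
by case/negP: cb; apply: (etrans (esym (E c)) ca).
Qed.

Lemma fsub_anti a b : fsub L a b -> fsub L b a -> a = b.
Proof. by move=> h1 h2; apply: L_inj => y; apply/idP/idP; [apply: h1|apply: h2]. Qed.

Lemma fsubS_lt b a : fsubS L b a -> ltK b a.
Proof.
move=> [h1 h2]; case: HW => _ _ tri _; case: HB => _ iso.
case: (tri b a) => [//| e | /iso [c [cb ca _]]].
  by subst; exfalso; apply: h2.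
by case/negP: ca; apply: h1.
Qed.

Definition gL (s : seq K) : K := projT1 (cid (proj1 HB s)).
Lemma gLE s : L (gL s) =i s.
Proof. exact: (projT2 (cid (proj1 HB s))). Qed.

Lemma enum_sub (l : seq K) :
  exists r, uniq r /\ forall b, (b \in r) <-> {subset L b <= l}.
Proof.
elim: l => [|x l [r [ur hr]]].
  exists [:: gL [::]]; split => // b; rewrite inE; split.
    by move/eqP => -> y; rewrite gLE.
  move=> h; apply/eqP; apply: L_inj => y; rewrite gLE in_nil.
  by apply/negbTE/negP => /h.
exists (undup (r ++ map (fun b => gL (x :: L b)) r)); split; first exact: undup_uniq.
move=> b; rewrite mem_undup mem_cat; split.
  case/orP => [/hr h y /h yl| /mapP [b' /hr h ->] y]; first by rewrite inE yl orbT.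
  by rewrite gLE inE => /orP [/eqP ->|/h yl]; rewrite inE ?eqxx ?yl ?orbT.
move=> h; case: (boolP (x \in L b)) => xb; last first.
  apply/orP; left; apply/hr => y yb; have := h _ yb; rewrite inE => /orP [/eqP e|//].
  by subst; rewrite yb in xb.
apply/orP; right; apply/mapP; exists (gL [seq y <- L b | y != x]).
  apply/hr => y; rewrite gLE mem_filter => /andP [yx yb]; have := h _ yb.
  by rewrite inE (negbTE yx).
apply: L_inj => y; rewrite gLE inE gLE mem_filter.
by case: eqVneq => [->|_] //=; rewrite xb.
Qed.

Lemma fsub_enum a : exists r, uniq r /\ [set b | fsub L b a] = [set` r].
Proof.
have [r [ur hr]] := enum_sub (L a); exists r; split => //.
by apply/seteqP; split => b /= h; apply/hr.
Qed.

Lemma memr_of a (r : seq K) : [set b | fsub L b a] = [set` r] -> forall b, (b \in r) <-> fsub L b a.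
Proof.
move=> E b; have := congr1 (fun S => S b) E => /= ->; by [].
Qed.

Lemma fx_seq (x : K -> int) a (r : seq K) : uniq r -> [set b | fsub L b a] = [set` r] ->
  fx L x a = \sum_(b <- r) x b.
Proof. by move=> ur E; rewrite /fx E [RHS]fsbig_seq. Qed.

Lemma fx_lin (u v : int) (x y : K -> int) a :
  fx L (fun b => u * x b + v * y b) a = u * fx L x a + v * fx L y a.
Proof.
have [r [ur E]] := fsub_enum a.
by rewrite !(fx_seq _ ur E) big_split /= -!mulr_sumr.
Qed.

Lemma fx_rec (x : K -> int) a : fx L x a = x a + \sum_(b \in [set b | fsubS L b a]) x b.
Proof.
have [r [ur E]] := fsub_enum a.
have ar : a \in r by apply/(memr_of E).
rewrite (fx_seq x ur E) (big_rem _ ar) /=; congr (_ + _).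
have -> : [set b | fsubS L b a] = [set` rem a r].
  apply/seteqP; split => b /=; rewrite (mem_rem_uniq _ ur) inE /=.
    move=> [h1 h2]; apply/andP; split; last exact/(memr_of E).
    by apply/eqP => e; subst; apply: h2.
  case/andP => ba /(memr_of E) h; split => // h'; move/eqP: ba; apply.
  exact: fsub_anti.
exact: fsbig_seq (rem_uniq _ ur).
Qed.

Definition wfK : well_founded ltK := match HW with And4 _ _ _ w => w end.

Definition Frec (g : K -> int) (a : K) (h : forall b, ltK b a -> int) : int :=
  g a - \sum_(b \in [set b | fsubS L b a])
          (match pselect (ltK b a) with left p => h b p | right _ => 0 end).

Definition Xrec g := Fix wfK (fun _ => int) (Frec g).

Lemma Xrec_eq g a : Xrec g a = g a - \sum_(b \in [set b | fsubS L b a]) Xrec g b.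
Proof.
rewrite /Xrec Fix_eq; last first.
  move=> a' f1 f2 e; rewrite /Frec; congr (_ - _); apply: eq_fsbigr => b _.
  by case: pselect.
rewrite /Frec; congr (_ - _); apply: eq_fsbigr => b /set_mem /= /fsubS_lt h.
by case: pselect.
Qed.

Lemma fx_Xrec g a : fx L (Xrec g) a = g a.
Proof. by rewrite fx_rec [X in X + _]Xrec_eq subrK. Qed.

Lemma fx_fin (x : K -> int) : finite_set [set a | x a != 0] ->
  exists t, forall k, fsub L t k -> fx L x k = \sum_(a \in [set: K]) x a.
Proof.
move=> fin; set s := fset_set [set a | x a != 0].
exists (gL (flatten (map L (finmap.enum_fset s)))) => k tk; rewrite /fx; apply: fsbig_widen => //.
move=> b [_ /= nb]; case: (eqVneq (x b) 0) => // nz; exfalso; apply: nb => y yb.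
apply: tk; rewrite gLE; apply/flattenP; exists (L b) => //; apply/mapP; exists b => //.
by rewrite in_fset_set // inE.
Qed.

Lemma fx_prod (x y : K -> int) a : fx L x a * fx L y a = fx L (zprod L x y) a.
Proof.
have [r [ur E]] := fsub_enum a.
have memr := memr_of E.
rewrite !(fx_seq _ ur E).
set P := [seq (i, j) | i <- r, j <- r].
have uP : uniq P by apply: allpairs_uniq => // -[? ?] [? ?].
transitivity (\sum_(p <- P) x p.1 * y p.2).
  by rewrite big_allpairs mulr_suml; apply: eq_bigr => i _; rewrite mulr_sumr.
have Z : forall c, c \in r -> zprod L x y c =
    \sum_(p <- P | `[< fjoin_is L p.1 p.2 c >]) (x p.1 * y p.2).
  move=> c cr; rewrite bigfs //; last first.
    have cA := proj1 (memr c) cr.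
    move=> p /asboolP J; case/negP; apply/allpairsP; exists (p.1, p.2).
    split; last by case: p {J}.
      apply/memr => z z1; apply: cA; by rewrite J mem_cat z1.
    apply/memr => z z1; apply: cA; by rewrite J mem_cat z1 orbT.
  rewrite /zprod; apply: eq_fsbigl; apply/seteqP; split => p /=.
    by move=> J; rewrite unfold_in; apply/asboolP.
  by rewrite unfold_in => /asboolP.
rewrite [RHS](eq_big_seq _ Z).
under [RHS]eq_bigr do rewrite big_mkcond.
rewrite [RHS]exchange_big /=.
rewrite big_seq [RHS]big_seq; apply: eq_bigr => p pP.
have [q [q1 q2 ->]] : exists q, [/\ q.1 \in r, q.2 \in r & p = (q.1, q.2)].
  by apply/allpairsP.
set c0 := gL (L q.1 ++ L q.2).
have c0r : c0 \in r.
  apply/memr => z; rewrite gLE mem_cat => /orP [] zq.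
    exact: (proj1 (memr _) q1).
  exact: (proj1 (memr _) q2).
rewrite (big_rem c0) //= asboolT; last exact: gLE.
rewrite big1_seq ?addr0 // => c /andP [_ cr].
rewrite asboolF // => J; move: cr; rewrite (mem_rem_uniq _ ur) inE => /andP [/eqP []].
apply: L_inj => z; by rewrite J gLE.
Qed.

End Formal2.

Theorem mainTheorem3 (K : choiceType) (ltK : K -> K -> Prop) (L : K -> seq K)
    (U : set (set K)) :
  strict_well_order ltK -> infinite_cardinal ltK -> base2_normal_form ltK L ->
  ultrafilter U -> fine L U ->
  euclidean_integers L (up_zero U) (up_one U) (@up_add K U) (@up_mul K U)
    (@up_opp K U) (@up_le K U) (@up_emb K U) (up_Sigma L U).
Proof.
move=> HW _ HB HU Hfine.
rewrite /up_zero /up_one /up_emb /up_Sigma.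
constructor.
- move=> a b c; elim/up_ind: a => f; elim/up_ind: b => g.
  elim/up_ind: c => h; rewrite !(addE HU); apply: eqU => k; exact: addrA.
- move=> a b; elim/up_ind: a => f; elim/up_ind: b => g.
  rewrite !(addE HU); apply: eqU => k; exact: addrC.
- move=> a; elim/up_ind: a => f.
  rewrite !(addE HU); apply: eqU => k; exact: add0r.
- move=> a; elim/up_ind: a => f.
  rewrite (oppE HU) !(addE HU); apply: eqU => k; exact: addNr.
- move=> a b c; elim/up_ind: a => f; elim/up_ind: b => g.
  elim/up_ind: c => h; rewrite !(mulE HU); apply: eqU => k; exact: mulrA.
- move=> a b; elim/up_ind: a => f; elim/up_ind: b => g.
  rewrite !(mulE HU); apply: eqU => k; exact: mulrC.
- move=> a; elim/up_ind: a => f.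
  rewrite !(mulE HU); apply: eqU => k; exact: mul1r.
- move=> a b c; elim/up_ind: a => f; elim/up_ind: b => g.
  elim/up_ind: c => h; rewrite (addE HU g h) !(mulE HU) (addE HU).
  apply: eqU => k; exact: mulrDr.
- by move=> /(upclsP HU) /= /(const_set HU).
- move=> a b; elim/up_ind: a => f; elim/up_ind: b => g.
  rewrite (mulE HU) => /(upclsP HU) /= H.
  have [Hf|Hf] := Uult HU [set k | f k = 0]; first by left; apply/(upclsP HU).
  have [Hg|Hg] := Uult HU [set k | g k = 0]; first by right; apply/(upclsP HU).
  exfalso; apply: (UN0 HU); apply: (U1 HU (UI HU H (UI HU Hf Hg))) => k [/= /eqP].
  by rewrite mulf_eq0 => /orP [/eqP e [/(_ e)]|/eqP e [_ /(_ e)]].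
- move=> a; elim/up_ind: a => f; apply/(leE HU); by apply: (U1 HU (UT HU)) => k _ /=.
- move=> a b; elim/up_ind: a => f; elim/up_ind: b => g.
  move=> /(leE HU) H1 /(leE HU) H2; apply/(upclsP HU).
  by apply: (U2 HU H1 H2) => k /= h1 h2; apply/eqP; rewrite eq_le h1 h2.
- move=> a b c; elim/up_ind: a => f; elim/up_ind: b => g.
  elim/up_ind: c => h.
  move=> /(leE HU) H1 /(leE HU) H2; apply/(leE HU).
  by apply: (U2 HU H1 H2) => k /= h1 h2; apply: le_trans h1 h2.
- move=> a b; elim/up_ind: a => f; elim/up_ind: b => g.
  have [H|H] := Uult HU [set k | f k <= g k]; first by left; apply/(leE HU).
  right; apply/(leE HU); apply: (U1 HU H) => k /= /negP; rewrite -ltNge; exact: ltW.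
- move=> a b c; elim/up_ind: a => f; elim/up_ind: b => g.
  elim/up_ind: c => h; rewrite !(addE HU).
  move=> /(leE HU) H1; apply/(leE HU); apply: (U1 HU H1) => k /= h1.
  by rewrite lerD2r.
- move=> a b; elim/up_ind: a => f; elim/up_ind: b => g.
  rewrite (mulE HU) => /(leE HU) H1 /(leE HU) H2; apply/(leE HU).
  by apply: (U2 HU H1 H2) => k /= h1 h2; apply: mulr_ge0.
- move=> a; elim/up_ind: a => f.
  move=> /(leE HU) H1 H0; apply/(leE HU).
  have [H|H] := Uult HU [set k | f k = 0].
    by exfalso; apply: H0; apply/(upclsP HU).
  apply: (U2 HU H1 H) => k /= h1 h2.
  by have : 0 < f k by rewrite lt_def h1 andbT; apply/eqP => e; apply: h2.
- by [].
- by [].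
- by move=> m n; rewrite (addE HU).
- by move=> m n; rewrite (mulE HU).
- by move=> m; rewrite (oppE HU).
- by move=> m n /(upclsP HU) /= /(const_set HU).
- move=> m n; rewrite (leE HU); split; first exact: (const_set HU).
  by move=> h; apply: (U1 HU (UT HU)) => k _ /=.
- move=> x fin; have [t Ht] := fx_fin HB fin.
  apply/(upclsP HU); apply: (U1 HU (Hfine t)) => k [h _]; exact: Ht.
- move=> r; exists (Xrec L HW (uprep r)).
  rewrite [RHS](uprepE r); apply: eqU => k; exact: (fx_Xrec HW HB).
- move=> u v x y; rewrite !(mulE HU) (addE HU); apply: eqU => k.
  by rewrite (fx_lin HW HB).
- move=> x y [t Ht]; apply/(leE HU); apply: (U1 HU (Hfine t)) => k [h _]; exact: Ht.
- move=> x y; rewrite (mulE HU); apply: eqU => k; exact: (fx_prod HW HB).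
Qed.
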